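(* Let $X=(X_1,\dots,X_n)$ be a random vector in $\mathcal{X}^n$ whose distribution is exchangeable, let $T:\mathcal{X}^n\to\mathbb{R}$ be a fixed (measurable) function, and let $q$ be any probability distribution on $\mathcal{S}_n$. Let $M\ge1$ and draw $\sigma_0,\sigma_1,\dots,\sigma_M$ i.i.d. from $q$, independently of $X$. Define $$\bar P=\frac{\sum_{m=0}^M\sum_{m'=0}^M\mathbf{1}\{T(X_{\sigma_m\circ\sigma_{m'}^{-1}})\ge T(X)\}}{(1+M)^2}.$$ Then $\mathbb{P}\{\bar P\le\alpha\}\le2\alpha$ for all $\alpha\in[0,1]$.
   Context: $\mathcal{S}_n$ denotes the set (group) of all permutations of $[n]=\{1,\dots,n\}$. For $x\in\mathcal{X}^n$ and $\sigma\in\mathcal{S}_n$, $x_\sigma:=(x_{\sigma(1)},\dots,x_{\sigma(n)})$. $X$ is exchangeable means $X\stackrel{d}{=}X_\pi$ for every fixed $\pi\in\mathcal{S}_n$. *)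

(* Defs.v *)
From HB Require Import structures.
From mathcomp Require Import all_boot all_order all_algebra all_fingroup.
From mathcomp Require Import all_classical all_reals all_analysis.
Set Implicit Arguments. Unset Strict Implicit. Unset Printing Implicit Defensive.
Import Order.TTheory GRing.Theory Num.Theory.
Local Open Scope classical_set_scope.
Local Open Scope ring_scope.

Definition permute (X : Type) (n : nat) (x : n.-tuple X) (s : 'S_n) : n.-tuple X :=
  [tuple tnth x (s i) | i < n].

(* Composition sigma o tau (first tau, then sigma) as a permutation.
   Note: in mathcomp, (t * s) x = s (t x), hence sigma o tau = tau * sigma. *)
Definition pcomp (n : nat) (s t : 'S_n) : 'S_n := (t * s)%g.

(* Mutual independence of the random elements X, sig_0, ..., sig_M
   (product rule; taking B m = setT gives every subfamily). *)
Definition mutually_independent (d : measure_display) (Omega : measurableType d)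
  (R : realType) (P : probability Omega R)
  (dX : measure_display) (Y : measurableType dX) (M n : nat)
  (X : Omega -> Y) (sig : 'I_M.+1 -> Omega -> 'S_n) : Prop :=
  forall (A : set Y) (B : 'I_M.+1 -> set 'S_n), measurable A ->
    P (X @^-1` A `&` \bigcap_(m in [set: 'I_M.+1]) (sig m @^-1` B m)) =
    (P (X @^-1` A) * \prod_(m < M.+1) P (sig m @^-1` B m))%E.

Definition Pbar (R : realType) (Xs : Type) (n M : nat)
  (T : n.-tuple Xs -> R) (x : n.-tuple Xs) (s : 'I_M.+1 -> 'S_n) : R :=
  (\sum_(m < M.+1) \sum_(m' < M.+1)
     (T x <= T (permute x (pcomp (s m) (s m')^-1%g)))%R%:R)
  / (M.+1%:R ^+ 2).

(* Main.v *)
Require Import Defs.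
From HB Require Import structures.
From mathcomp Require Import all_boot all_order all_algebra all_fingroup.
From mathcomp Require Import all_classical all_reals all_analysis.
From mathcomp Require Import lra ring measurable_realfun.
Import Order.TTheory GRing.Theory Num.Theory.
Local Open Scope classical_set_scope.
Local Open Scope ring_scope.
Lemma comb d (T : measurableType d) (R : realType) (mu : {measure set T -> \bar R})
  (I J : finType) (a : I -> R) (b : J -> R) (A : I -> set T) (B : J -> set T) :
  (forall i, measurable (A i)) -> (forall j, measurable (B j)) ->
  (forall i, 0 <= a i) -> (forall j, 0 <= b j) ->
  (forall x, \sum_i a i * \1_(A i) x <= \sum_j b j * \1_(B j) x) ->
  (\sum_i (a i)%:E * mu (A i) <= \sum_j (b j)%:E * mu (B j))%E.
Proof.
move=> mA mB a0 b0 H.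
have key : forall (K : finType) (c : K -> R) (C : K -> set T),
    (forall k, measurable (C k)) -> (forall k, 0 <= c k) ->
    (\sum_k (c k)%:E * mu (C k) = \int[mu]_(x in setT) (\sum_k c k * \1_(C k) x)%:E)%E.
  move=> K c C mC c0.
  under eq_integral do rewrite -sumEFin.
  rewrite ge0_integral_sum //; last first.
    by move=> k x _; rewrite lee_fin mulr_ge0.
    by move=> k; apply/measurable_EFinP; apply: measurable_funM => //; exact: measurable_indic.
  apply: eq_bigr => k _.
  under eq_integral do rewrite EFinM.
  rewrite ge0_integralZl_EFin ?integral_indic ?setIT //.
  all: try (by move=> x _; rewrite lee_fin).
  all: try (by apply/measurable_EFinP; exact: measurable_indic).
  all: idtac.
rewrite key // key //.
apply: ge0_le_integral => //.
- by move=> x _; rewrite lee_fin; apply: sumr_ge0 => i _; rewrite mulr_ge0.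
- apply/measurable_EFinP; apply: measurable_sum => i.
  by apply: measurable_funM => //; exact: measurable_indic.
- apply/measurable_EFinP; apply: measurable_sum => i.
  by apply: measurable_funM => //; exact: measurable_indic.
- by move=> x _; rewrite lee_fin.
Qed.
Definition clampc {R : realType} (t : R) : R :=
  if t <= 0 then 0 else if t <= 1 then t else 1.

Lemma clampc_ge0 (R : realType) (t : R) : 0 <= clampc t.
Proof. rewrite /clampc; case: ifP => // h; case: ifP => // _; lra. Qed.

Lemma clampc_le0 (R : realType) (t : R) : t <= 0 -> clampc t = 0.
Proof. by rewrite /clampc => ->. Qed.

Lemma sumL1 (R : realType) N (b : R) : b <= 0 ->
  \sum_(0 <= j < N) clampc (b - j%:R) = 0.
Proof.
move=> hb; rewrite big1_seq // => j _; apply: clampc_le0.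
have : (0 <= (j%:R : R)) by [].
lra.
Qed.

Lemma sumL2 (R : realType) N : forall (b : R), 0 <= b ->
  \sum_(0 <= j < N) clampc (b - j%:R) <= b.
Proof.
elim: N => [|N IH] b hb; first by rewrite big_nil.
rewrite big_nat_recl //.
under eq_bigr do rewrite -natr1 opprD addrA addrAC.
rewrite subr0.
have [h1|h1] := lerP b 1.
  rewrite sumL1; last lra.
  rewrite /clampc; case: ifP => _; first lra. by rewrite h1; lra.
have := IH (b - 1) ltac:(lra).
rewrite /clampc; case: ifP => hh; first lra.
rewrite ifN; last by rewrite -ltNge.
lra.
Qed.

Lemma sumH0 (R : realType) N (a : R) : a <= 1 ->
  \sum_(0 <= j < N) clampc (a - (j.+1)%:R) * (j.+1)%:R = 0.
Proof.
move=> ha; rewrite big1_seq // => j _; rewrite clampc_le0 ?mul0r //.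
have : (1 <= (j.+1%:R : R)) by rewrite ler1n.
lra.
Qed.

Lemma sumH (R : realType) N : forall (a : R), 0 <= a ->
  \sum_(0 <= j < N) clampc (a - (j.+1)%:R) * (j.+1)%:R <= a ^+ 2 / 2.
Proof.
elim: N => [|N IH] a ha.
  by rewrite big_nil; apply: divr_ge0 => //; apply: sqr_ge0.
have [h1|h1] := lerP a 1.
  by rewrite sumH0 //; apply: divr_ge0 => //; apply: sqr_ge0.
have E : \sum_(0 <= i < N) clampc (a - (i.+2)%:R) * (i.+2)%:R =
   \sum_(0 <= i < N) clampc ((a-1) - (i.+1)%:R) * (i.+1)%:R +
   \sum_(0 <= i < N) clampc ((a-1) - (i.+1)%:R).
  rewrite -big_split; apply: eq_bigr => i _.
  rewrite -[(i.+2)%:R]natr1 mulrDr mulr1.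
  by congr (clampc _ * _ + clampc _); lra.
rewrite big_nat_recl // E.
have h2 := IH (a - 1) ltac:(lra).
have h3 := sumL2 R N.+1 (a - 1) ltac:(lra).
rewrite big_nat_recl // subr0 in h3.
have E2 : \sum_(0 <= i < N) clampc (a - 1 - (i.+1)%:R) = \sum_(0 <= i < N) clampc (a - 1 - (i.+1)%:R) by [].
rewrite /= mulr1.
move: h2 h3.
set X := clampc (a - 1); set Y := \sum_(_ <= _ < _) (_ * _); set Z := \sum_(_ <= _ < _) _.
rewrite !expr2 => h2 h3.
nra.
Qed.

Lemma clampc_ge (R : realType) (t : R) : t <= 1 -> t <= clampc t.
Proof. rewrite /clampc => h; case: ifP => h2 //; case: ifP => h3 //; lra. Qed.

Lemma clampc_1 (R : realType) (t : R) : 1 <= t -> clampc t = 1.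
Proof.
rewrite /clampc => h; rewrite ifN; last by rewrite -ltNge; lra.
case: ifP => // h2; lra.
Qed.

Lemma sumG (R : realType) N : forall (a : R) (K : nat), a <= (N.+1)%:R ->
  a - (K.+1)%:R <= \sum_(0 <= j < N) clampc (a - (j.+1)%:R) * (K <= j)%N%:R.
Proof.
elim: N => [|N IH] a K ha.
  rewrite big_nil.
  have : (1 <= (K.+1%:R : R)) by rewrite ler1n.
  lra.
rewrite big_nat_recl //.
have E : forall K', \sum_(0 <= i < N) clampc (a - (i.+2)%:R) * (K' < i.+1)%N%:R =
   \sum_(0 <= i < N) clampc ((a-1) - (i.+1)%:R) * (K' <= i)%N%:R.
  move=> K'; apply: eq_bigr => i _.
  rewrite ltnS -[(i.+2)%:R]natr1.
  by congr (clampc _ * _); lra.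
case: K => [|K].
  have -> : \sum_(0 <= i < N) clampc (a - (i.+2)%:R) * (0 <= i.+1)%N%:R =
   \sum_(0 <= i < N) clampc ((a-1) - (i.+1)%:R) * (0 <= i)%N%:R.
    apply: eq_bigr => i _.
    rewrite -[(i.+2)%:R]natr1.
    by congr (clampc _ * _); lra.
  have h2 := IH (a - 1) 0%N ltac:(rewrite -natr1 in ha; lra).
  rewrite /= mulr1.
  have hs : 0 <= \sum_(0 <= i < N) clampc (a - 1 - (i.+1)%:R) * (0 <= i)%N%:R.
    by apply: sumr_ge0 => i _; apply: mulr_ge0 => //; apply: clampc_ge0.
  have [h1|h1] := lerP 1 (a - 1).
    rewrite clampc_1 //; lra.
  have := clampc_ge R _ (ltW h1). lra.
rewrite E.
have h2 := IH (a - 1) K ltac:(rewrite -natr1 in ha; lra).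
rewrite ltn0 mulr0 add0r.
rewrite -[(K.+2)%:R]natr1. lra.
Qed.
Lemma rank_count (R : realType) N (v : 'I_N -> R) (k : nat) :
  (\sum_(m < N) ((\sum_(m' < N) (v m <= v m')%R) <= k)%N <= k)%N.
Proof.
set S := fun m : 'I_N => ((\sum_(m' < N) (v m <= v m')%R) <= k)%N.
case: (pickP S) => [m0 Sm0|noS]; last first.
  by rewrite big1 // => m _; have := noS m; rewrite /S => ->.
case: (@Order.TotalTheory.arg_minP _ R _ m0 S v Sm0) => ms Sms minms.
apply: leq_trans Sms; apply: leq_sum => m _.
have [Sm|Sm] := boolP (S m).
  have h := minms m Sm; move: Sm; rewrite /S => ->; by rewrite h.
by move: Sm; rewrite /S => /negbTE ->.
Qed.

Lemma combP d (T : measurableType d) (R : realType) (P : probability T R)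
  (I J : finType) (a : I -> R) (b : J -> R) (A : I -> set T) (B : J -> set T) :
  (forall i, measurable (A i)) -> (forall j, measurable (B j)) ->
  (forall i, 0 <= a i) -> (forall j, 0 <= b j) ->
  (forall x, \sum_i a i * \1_(A i) x <= \sum_j b j * \1_(B j) x) ->
  \sum_i a i * fine (P (A i)) <= \sum_j b j * fine (P (B j)).
Proof.
move=> mA mB a0 b0 H.
have := comb d T R P I J a b A B mA mB a0 b0 H.
rewrite (eq_bigr (fun i => (a i * fine (P (A i)))%:E)); last first.
  by move=> i _; rewrite EFinM fineK //; apply: fin_num_measure.
rewrite [X in (_ <= X)%E](eq_bigr (fun i => (b i * fine (P (B i)))%:E)); last first.
  by move=> i _; rewrite EFinM fineK //; apply: fin_num_measure.
by rewrite !sumEFin lee_fin.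
Qed.

Lemma indic_bool (T : Type) (R : realType) (b : T -> bool) x :
  \1_[set y | b y] x = (b x)%:R :> R.
Proof.
rewrite indicE; case: (boolP (b x)) => h.
  by rewrite mem_set.
by rewrite memNset //; apply/negP.
Qed.

Lemma indic_pre (T U : Type) (R : realType) (f : T -> U) (b : U -> bool) x :
  \1_(f @^-1` [set y | b y]) x = (b (f x))%:R :> R.
Proof.
rewrite indicE; case: (boolP (b (f x))) => h.
  by rewrite mem_set.
by rewrite memNset //; apply/negP.
Qed.

Lemma permute_comp (X : Type) n (x : n.-tuple X) (p t : 'S_n) :
  permute (permute x p) t = permute x (t * p)%g.
Proof. by apply: eq_from_tnth => i; rewrite /permute !tnth_mktuple permM. Qed.

Lemma permute1 (X : Type) n (x : n.-tuple X) : permute x 1%g = x.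
Proof. by apply: eq_from_tnth => i; rewrite /permute !tnth_mktuple perm1. Qed.

Lemma measurable_permute d (Xs : measurableType d) n (p : 'S_n) :
  measurable_fun setT (fun x : n.-tuple Xs => permute x p).
Proof.
apply/measurable_fun_tnthP => i.
rewrite (_ : _ \o _ = (@tnth n Xs ^~ (p i))); first exact: measurable_tnth.
by apply/funext => x /=; rewrite tnth_mktuple.
Qed.

Lemma measurable_boolR d (T : measurableType d) (R : realType) (f : T -> bool) :
  measurable_fun setT f -> measurable_fun setT (fun x => (f x)%:R : R).
Proof.
move=> mf; by apply: (measurableT_comp (f := fun b : bool => (b%:R : R))).
Qed.

Lemma mset_le d (T : measurableType d) (R : realType) (f : T -> R) c :
  measurable_fun setT f -> measurable [set x | f x <= c].
Proof.
move=> mf.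
have := measurable_fun_ler mf (measurable_cst c) measurableT (Y := [set true]) I.
by rewrite setTI.
Qed.

Definition Kn (R : realType) (Xs : Type) (n N : nat) (T : n.-tuple Xs -> R)
  (x : n.-tuple Xs) (s : 'I_N -> 'S_n) (m : 'I_N) : nat :=
  \sum_(m' < N) (T x <= T (permute x (Defs.pcomp (s m) (s m')^-1%g)))%R.
Arguments Kn {R Xs n N}.

Lemma Pbar_Kn (R : realType) (Xs : Type) (n M : nat) (T : n.-tuple Xs -> R) x s :
  Pbar T x s = (\sum_(m < M.+1) Kn T x s m)%N%:R / (M.+1%:R ^+ 2).
Proof.
rewrite /Pbar natr_sum; congr (_ / _); apply: eq_bigr => m _.
by rewrite /Kn natr_sum.
Qed.

Lemma Kn_ge1 (R : realType) (Xs : Type) (n N : nat) (T : n.-tuple Xs -> R) x (s : 'I_N -> 'S_n) m :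
  (1 <= Kn T x s m)%N.
Proof.
rewrite /Kn (bigD1 m) //= /Defs.pcomp mulVg permute1 lexx.
by rewrite add1n.
Qed.

Lemma Kn_shift (R : realType) (Xs : Type) (n N : nat) (T : n.-tuple Xs -> R) z (s : 'I_N -> 'S_n) m :
  Kn T (permute z (s m)^-1%g) s m =
  (\sum_(m' < N) (T (permute z (s m)^-1%g) <= T (permute z (s m')^-1%g))%R)%N.
Proof.
by rewrite /Kn; apply: eq_bigr => m' _; rewrite permute_comp /Defs.pcomp -mulgA mulgV mulg1.
Qed.

Lemma measurable_Kn (R : realType) d (Xs : measurableType d) (n N : nat)
  (T : n.-tuple Xs -> R) (mT : measurable_fun setT T) (s : 'I_N -> 'S_n) m :
  measurable_fun setT (fun x => (Kn T x s m)%:R : R).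
Proof.
rewrite /Kn; under eq_fun do rewrite natr_sum.
apply: measurable_sum => m'.
apply: measurable_boolR; apply: measurable_fun_ler => //.
by apply: measurableT_comp => //; exact: measurable_permute.
Qed.

Lemma Pbar_gt0 (R : realType) (Xs : Type) (n M : nat) (T : n.-tuple Xs -> R) x
  (s : 'I_M.+1 -> 'S_n) : 0 < Pbar T x s.
Proof.
rewrite Pbar_Kn; apply: divr_gt0; last by apply: exprn_gt0; rewrite ltr0n.
rewrite ltr0n (bigD1 ord0) //=.
exact: leq_trans (Kn_ge1 _ _ _ _ T x s ord0) (leq_addr _ _).
Qed.

Theorem theorem9
  (R : realType) (d : measure_display) (Omega : measurableType d)
  (P : probability Omega R)
  (dX : measure_display) (Xs : measurableType dX) (n : nat)
  (X : Omega -> n.-tuple Xs) (mX : measurable_fun setT X)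
  (exch : forall (pi : 'S_n) (A : set (n.-tuple Xs)), measurable A ->
     P (X @^-1` A) = P ((fun w => permute (X w) pi) @^-1` A))
  (T : n.-tuple Xs -> R) (mT : measurable_fun setT T)
  (q : {ffun 'S_n -> R}) (q_ge0 : forall s, 0 <= q s)
  (q_sum1 : \sum_(s : 'S_n) q s = 1)
  (M : nat) (M_ge1 : (1 <= M)%N)
  (sig : 'I_M.+1 -> Omega -> 'S_n)
  (msig : forall m (B : set 'S_n), measurable (sig m @^-1` B))
  (sig_law : forall m (s : 'S_n), P (sig m @^-1` [set s]) = (q s)%:E)
  (indep : mutually_independent P X sig) :
  forall alpha : R, 0 <= alpha <= 1 ->
    (P [set w | Pbar T (X w) (fun m => sig m w) <= alpha]%R <= (2 * alpha)%:E)%E.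
Proof.
move=> alpha /andP[al0 al1].
pose E := [set w | Pbar T (X w) (fun m => sig m w) <= alpha].
pose A := fun s : {ffun 'I_M.+1 -> 'S_n} => [set x | Pbar T x s <= alpha].
pose C := fun s : {ffun 'I_M.+1 -> 'S_n} =>
  X @^-1` A s `&` \bigcap_(m in [set: 'I_M.+1]) (sig m @^-1` [set s m]).
pose Q := fun s : {ffun 'I_M.+1 -> 'S_n} => \prod_(m < M.+1) q (s m).
pose mu := fun B => fine (P (X @^-1` B)).
have mpre : forall B, measurable B -> measurable (X @^-1` B).
  by move=> B mB; rewrite -[X @^-1` B]setTI; exact: mX.
have mPbar : forall s : {ffun 'I_M.+1 -> 'S_n}, measurable_fun setT (fun x => Pbar T x s).
  move=> s; under eq_fun do rewrite Pbar_Kn natr_sum.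
  apply: measurable_funM => //; apply: measurable_sum => m; exact: measurable_Kn.
have mA : forall s, measurable (A s) by move=> s; exact: mset_le (mPbar s).
have mC : forall s, measurable (C s).
  move=> s; apply: measurableI; first exact: mpre.
  by apply: fin_bigcap_measurable; [exact: finite_finset| move=> m _; exact: msig].
have EC : E = \bigcup_(s in [set: {ffun 'I_M.+1 -> 'S_n}]) C s.
  apply/seteqP; split => w.
    move=> hw; exists [ffun m => sig m w] => //; split.
      rewrite /A /preimage /=.
      have -> : (fun_of_fin [ffun m => sig m w]) = (fun m => sig m w).
        by apply/funext => m; rewrite ffunE.
      exact: hw.
    by move=> m _ /=; rewrite ffunE.
  move=> [s _ [hA hsig]]; rewrite /E /=.
  have -> : (fun m => sig m w) = s.
    by apply/funext => m; have := hsig m I.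
  exact: hA.
have mE : measurable E.
  by rewrite EC; apply: fin_bigcup_measurable; [exact: finite_finset|move=> s _; exact: mC].
have Q0 : forall s, 0 <= Q s by move=> s; apply: prodr_ge0 => m _.
have Q1 : \sum_s Q s = 1.
  transitivity (\prod_(m < M.+1) \sum_(s : 'S_n) q s).
    by rewrite bigA_distr_bigA.
  by rewrite big1 // => m _; rewrite q_sum1.
have muE : forall B, measurable B -> P (X @^-1` B) = (mu B)%:E.
  by move=> B mB; rewrite /mu fineK //; apply: fin_num_measure; exact: mpre.
have PC : forall s, fine (P (C s)) = mu (A s) * Q s.
  move=> s; rewrite /C indep; last exact: mA.
  rewrite (eq_bigr (fun m => (q (s m))%:E)); last by move=> m _; rewrite sig_law.
  by rewrite prodEFin muE // -EFinM.
have F1 : fine (P E) <= \sum_s mu (A s) * Q s.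
  have pw : forall w, \sum_(i < 1) 1 * \1_E w <= \sum_s 1 * \1_(C s) w :> R.
    move=> w; rewrite big_ord1 mul1r.
    under eq_bigr do rewrite mul1r.
    have h0 : forall s, 0 <= \1_(C s) w :> R.
      by move=> s; rewrite indicE.
    case: (boolP (w \in E)) => hw.
      have [s _ hs] : (\bigcup_(s in [set: {ffun 'I_M.+1 -> 'S_n}]) C s) w.
        by rewrite -EC; move: hw; rewrite inE.
      rewrite (bigD1 s) //= indicE hw indicE mem_set //.
      rewrite lerDl; apply: sumr_ge0 => i _; exact: h0.
    by rewrite indicE (negbTE hw); apply: sumr_ge0 => i _; exact: h0.
  have := @combP _ _ _ P 'I_1 {ffun 'I_M.+1 -> 'S_n} (fun _ => 1) (fun _ => 1)
    (fun _ => E) C (fun _ => mE) mC (fun _ => ler01) (fun _ => ler01) pw.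
  rewrite big_ord1 mul1r => h; apply: le_trans h _.
  by rewrite le_eqVlt; apply/orP; left; apply/eqP/eq_bigr => s _; rewrite mul1r PC.
pose Ks := fun (s : {ffun 'I_M.+1 -> 'S_n}) (m : 'I_M.+1) (j : nat) =>
  [set x : n.-tuple Xs | (Kn T x s m <= j)%N].
have mK : forall s m j, measurable (Ks s m j).
  move=> s m j.
  have -> : Ks s m j = [set x | (Kn T x s m)%:R <= (j%:R : R)].
    by apply/funext => x /=; rewrite ler_nat.
  by apply: mset_le; exact: measurable_Kn.
have F2 : forall s j, \sum_(m < M.+1) mu (Ks s m j) <= j%:R.
  move=> s j.
  pose Dm := fun m : 'I_M.+1 =>
    X @^-1` ((fun z => permute z (s m)^-1%g) @^-1` Ks s m j).
  have e : forall m, mu (Ks s m j) = fine (P (Dm m)).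
    by move=> m; rewrite /mu (exch (s m)^-1%g _ (mK s m j)).
  have mD : forall m, measurable (Dm m).
    move=> m; apply: mpre; rewrite -[X in measurable X]setTI.
    by apply: measurable_permute => //; exact: mK.
  have pw : forall w, \sum_(m < M.+1) 1 * \1_(Dm m) w <=
      \sum_(i < 1) j%:R * \1_[set: Omega] w :> R.
    move=> w; rewrite big_ord1 indicE mem_set // mulr1.
    under eq_bigr do rewrite mul1r indic_bool Kn_shift.
    rewrite -natr_sum ler_nat.
    exact: (rank_count R _ (fun m => T (permute (X w) (s m)^-1%g)) j).
  have := @combP _ _ _ P 'I_M.+1 'I_1 (fun _ => 1) (fun _ => j%:R)
    Dm (fun _ => setT) mD (fun _ => measurableT) (fun _ => ler01) (fun _ => ler0n _ _) pw.
  rewrite big_ord1 probability_setT /= mulr1 => h; apply: le_trans h.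
  by rewrite le_eqVlt; apply/orP; left; apply/eqP/eq_bigr => m _; rewrite mul1r e.
have PE : P E = (fine (P E))%:E by rewrite fineK //; apply: fin_num_measure.
change (P E <= (2 * alpha)%:E)%E; rewrite PE lee_fin.
have [ahalf|ahalf] := lerP (2^-1) alpha.
  have := probability_le1 P mE; rewrite PE lee_fin => h; lra.
have [az|apos] := eqVneq alpha 0.
  have -> : E = set0.
    apply/seteqP; split => w //= hw.
    have := Pbar_gt0 _ _ _ _ T (X w) (fun m => sig m w); move: hw; rewrite /E /= az; lra.
  rewrite measure0 /= az; lra.
have apos' : 0 < alpha by rewrite lt_neqAle eq_sym apos al0.
pose NR : R := (M.+1)%:R.
have NR0 : 0 < NR by rewrite ltr0n.
pose a := 2 * alpha * NR.
pose c := fun j : 'I_M.+1 => clampc (a - (j.+1)%:R).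
have c0 : forall j, 0 <= c j by move=> j; exact: clampc_ge0.
have tri : forall G : {ffun 'I_M.+1 -> 'S_n} -> 'I_M.+1 -> 'I_M.+1 -> R,
    \sum_(p : {ffun 'I_M.+1 -> 'S_n} * 'I_M.+1 * 'I_M.+1) G p.1.1 p.1.2 p.2 =
    \sum_s \sum_m \sum_j G s m j.
  move=> G.
  rewrite -(pair_bigA _ (fun p1 j => G p1.1 p1.2 j)).
  by rewrite -(pair_bigA _ (fun s m => \sum_j G s m j)).
have F3 : \sum_s (Q s * (alpha * NR ^+ 2)) * mu (A s) <=
    \sum_(p : {ffun 'I_M.+1 -> 'S_n} * 'I_M.+1 * 'I_M.+1)
      (Q p.1.1 * c p.2) * mu (Ks p.1.1 p.1.2 p.2.+1).
  apply: (@combP _ _ _ P _ _ (fun s => Q s * (alpha * NR ^+ 2))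
     (fun p : {ffun 'I_M.+1 -> 'S_n} * 'I_M.+1 * 'I_M.+1 => Q p.1.1 * c p.2)
     (fun s => X @^-1` A s)
     (fun p => X @^-1` Ks p.1.1 p.1.2 p.2.+1)).
  - by move=> s; apply: mpre.
  - by move=> p; apply: mpre.
  - by move=> s; apply: mulr_ge0 => //; apply: mulr_ge0 => //; apply: ltW; apply: exprn_gt0.
  - by move=> p; apply: mulr_ge0.
  move=> w.
  rewrite (tri (fun s m j => Q s * c j * \1_(X @^-1` Ks s m j.+1) w)).
  apply: ler_sum => s _.
  under eq_bigr do under eq_bigr do rewrite -mulrA.
  under eq_bigr do rewrite -mulr_sumr.
  rewrite -mulr_sumr -mulrA; apply: ler_wpM2l; first exact: Q0.
  rewrite indicE; case: (boolP (w \in X @^-1` A s)) => hw; last first.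
    rewrite mulr0; apply: sumr_ge0 => m _; apply: sumr_ge0 => j _.
    by apply: mulr_ge0 => //; rewrite indicE.
  rewrite mulr1.
  have hP : Pbar T (X w) s <= alpha by move: hw; rewrite in_setE.
  rewrite Pbar_Kn ler_pdivrMr in hP; last by apply: exprn_gt0; rewrite ltr0n.
  have hP' : (\sum_(m < M.+1) Kn T (X w) s m)%N%:R <= alpha * NR ^+ 2 by [].
  have ha : a <= (M.+2)%:R.
    rewrite -natr1 -/NR /a; nra.
  have hm : forall m, a - (Kn T (X w) s m)%:R <=
      \sum_j c j * \1_(X @^-1` Ks s m j.+1) w.
    move=> m; rewrite /Ks.
    under eq_bigr do rewrite indic_pre.
    move: (Kn_ge1 _ _ _ _ T (X w) s m); case: (Kn T (X w) s m) => [//|K] _.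
    have := sumG R M.+1 a K ha; rewrite big_mkord.
    by under eq_bigr do rewrite ltnS.
  apply: le_trans (ler_sum _ (fun m _ => hm m)).
  rewrite sumrB sumr_const card_ord -mulr_natr -/NR -natr_sum.
  rewrite /a; nra.
have pos : 0 < alpha * NR ^+ 2 by apply: mulr_gt0 => //; exact: exprn_gt0.
have H1 : alpha * NR ^+ 2 * fine (P E) <= alpha * NR ^+ 2 * \sum_s mu (A s) * Q s.
  by apply: ler_wpM2l => //; exact: ltW.
have H2 : alpha * NR ^+ 2 * \sum_s mu (A s) * Q s =
    \sum_s (Q s * (alpha * NR ^+ 2)) * mu (A s).
  by rewrite mulr_sumr; apply: eq_bigr => s _; ring.
have H3 : \sum_(p : {ffun 'I_M.+1 -> 'S_n} * 'I_M.+1 * 'I_M.+1)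
      (Q p.1.1 * c p.2) * mu (Ks p.1.1 p.1.2 p.2.+1) =
    \sum_s Q s * \sum_j c j * \sum_m mu (Ks s m j.+1).
  rewrite (tri (fun s m j => Q s * c j * mu (Ks s m j.+1))).
  apply: eq_bigr => s _; rewrite exchange_big mulr_sumr.
  apply: eq_bigr => j _; rewrite mulr_sumr mulr_sumr.
  by apply: eq_bigr => m _; ring.
have H4 : \sum_s Q s * \sum_j c j * \sum_m mu (Ks s m j.+1) <=
    \sum_s Q s * \sum_(j < M.+1) c j * (j.+1)%:R.
  apply: ler_sum => s _; apply: ler_wpM2l; first exact: Q0.
  apply: ler_sum => j _; apply: ler_wpM2l; first exact: c0.
  exact: F2.
have H5 : \sum_s Q s * \sum_(j < M.+1) c j * (j.+1)%:R = \sum_(j < M.+1) c j * (j.+1)%:R.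
  by rewrite -mulr_suml Q1 mul1r.
have H6 : \sum_(j < M.+1) c j * (j.+1)%:R <= a ^+ 2 / 2.
  have := sumH R M.+1 a ltac:(rewrite /a; nra).
  by rewrite big_mkord.
rewrite -(ler_pM2l pos).
apply: le_trans H1 _; rewrite H2; apply: le_trans F3 _; rewrite H3.
apply: le_trans H4 _; rewrite H5; apply: le_trans H6 _.
rewrite /a !expr2; nra.
Qed.
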